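(* Let $H \le G$ be finite groups such that the interval $[H,G]$ is bottom Boolean. Then $[H,G]$ is linearly primitive, i.e. there is an irreducible complex representation $V$ of $G$ with $G_{(V^H)} = H$.
   Context: The interval $[H,G]$ is the lattice of subgroups $L$ with $H \le L \le G$ (meet = intersection, join = generated subgroup); its atoms are its minimal elements strictly above $H$; its bottom interval is $[H,B]$ with $B$ the join of all atoms. A finite lattice is Boolean if it is isomorphic to the lattice of all subsets of a finite set; $[H,G]$ is bottom Boolean if its bottom interval is Boolean. For a representation $V$ of $G$ and a subspace $X$: $V^H = \{v : hv = v \ \forall h \in H\}$ and $G_{(X)} = \{g \in G : gx = x \ \forall x \in X\}$. *)

(* Defs.v *)
From HB Require Import structures.
From mathcomp Require Import all_boot all_order all_algebra all_fingroup all_solvable all_field all_character.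
Set Implicit Arguments. Unset Strict Implicit. Unset Printing Implicit Defensive.

Section SubgroupInterval.
Variable gT : finGroupType.
Implicit Types H G L K : {group gT}.

Definition sg_interval H G : {set {group gT}} :=
  [set L : {group gT} | (H \subset L) && (L \subset G)].

Definition sg_atom H G L : bool :=
  [&& L \in sg_interval H G, H \proper L &
      [forall K : {group gT},
         ((K \in sg_interval H G) && (H \proper K) && (K \subset L)) ==> (K == L)]].

Definition sg_bottom_top H G : {set gT} :=
  (<<H :|: \bigcup_(L : {group gT} | sg_atom H G L) L>>)%g.

(* The interval [H,B] (B a set) is Boolean: order-isomorphic (hence
   lattice-isomorphic) to the lattice of all subsets of a finite set 'I_n. *)
Definition sg_interval_boolean H (B : {set gT}) : Prop :=
  exists n : nat, exists f : {group gT} -> {set 'I_n},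
    let I := [set L : {group gT} | (H \subset L) && (L \subset B)] in
    {in I &, forall L K, (L \subset K) = (f L \subset f K)} /\
    (forall S : {set 'I_n}, exists2 L, L \in I & f L = S).

Definition bottom_boolean H G : Prop :=
  sg_interval_boolean H (sg_bottom_top H G).

Definition linearly_primitive H G : Prop :=
  exists n : nat, exists rG : mx_representation algC G n,
    mx_irreducible rG /\ rstab rG (rfix_mx rG H) = H.

End SubgroupInterval.

(* Main.v *)
Require Import Defs.
From mathcomp Require Import all_boot all_order all_algebra all_fingroup all_solvable all_field all_character.
Set Implicit Arguments. Unset Strict Implicit. Unset Printing Implicit Defensive.

Section Comb.
Variable gT : finGroupType.
Implicit Types H G K L X : {group gT}.

Lemma atom_below H G X : H \proper X -> X \subset G ->
  exists K, sg_atom H G K && (K \subset X).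
Proof.
move=> pHX sXG.
pose gP := fun K : {group gT} => (H \proper K) && (K \subset X).
have gPX : gP X by rewrite /gP pHX subxx.
have [K minK sKX] := mingroup_exists gPX.
case/mingroupP: minK => /andP[pHK _] minK.
exists K; rewrite sKX andbT /sg_atom pHK /sg_interval inE (proper_sub pHK).
rewrite (subset_trans sKX sXG) /=; apply/forallP => K'; apply/implyP.
case/andP=> /andP[_ pHK'] sK'K; apply/eqP; apply: val_inj => /=.
by apply: minK => //; rewrite /gP pHK' (subset_trans sK'K sKX).
Qed.

Lemma atom_sub H G K : sg_atom H G K -> K \subset sg_bottom_top H G.
Proof.
move=> aK; rewrite /sg_bottom_top; apply: sub_gen; apply: subsetU; apply/orP; right.
exact: (bigcup_sup K aK).
Qed.

Lemma atoms_indep H G (p : seq {group gT}) K :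
  bottom_boolean H G -> sg_atom H G K -> all (sg_atom H G) p -> K \notin p ->
  ~~ (K \subset <<H :|: \bigcup_(L <- p) L>>%g).
Proof.
move=> [n [f /= [emb surj]]] aK ap Kp.
set B := sg_bottom_top H G.
set I := [set L : {group gT} | (H \subset L) && (L \subset B)].
have HI : H \in I by rewrite inE subxx /B /sg_bottom_top sub_gen // subsetUl.
have atI L : sg_atom H G L -> L \in I.
  by move=> aL; rewrite inE atom_sub // andbT; case/and3P: aL => _ /proper_sub.
have [L0 L0I fL0] := surj set0.
have fH : f H = set0.
  apply/eqP; rewrite -subset0 -fL0 -emb //.
  by move: (L0I); rewrite inE => /andP[].
have fsing L : sg_atom H G L -> exists x, f L = [set x].
  move=> aL; have LI := atI L aL.
  case/and3P: (aL) => LHG pHL minL.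
  have : f L != set0.
    apply: contraNneq (proper_subn pHL) => fL0'.
    by rewrite emb // fH fL0' subxx.
  case/set0Pn=> x fLx; exists x.
  have [L' L'I fL'] := surj [set x].
  have sL'L : L' \subset L by rewrite emb // fL' sub1set.
  have pHL' : H \proper L'.
    rewrite properE; move: (L'I); rewrite inE => /andP[-> _] /=.
    by rewrite emb // fL' fH; apply/negP => /subsetP/(_ x (set11 x)); rewrite inE.
  have L'G : L' \in sg_interval H G.
    rewrite /sg_interval inE (proper_sub pHL') /=.
    by apply: subset_trans sL'L _; rewrite /sg_interval inE in LHG; case/andP: LHG.
  have := forallP minL L'; rewrite L'G pHL' sL'L /= => /eqP <-. exact: fL'.
have [N NI fN] := surj (\bigcup_(L <- p) f L).
apply/negP => sKM.
have sMN : <<H :|: \bigcup_(L <- p) L>>%g \subset N.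
  rewrite gen_subG subUset; move: (NI); rewrite inE => /andP[-> _] /=.
  rewrite bigcup_seq; apply/bigcupsP => L Lp.
  have aL := allP ap L Lp.
  rewrite (emb L N) ?(atI L aL) // fN bigcup_seq; exact: (bigcup_sup L Lp).
have : f K \subset f N by rewrite -(emb K N) ?(atI K aK) // (subset_trans sKM sMN).
have [x fKx] := fsing K aK.
rewrite fN fKx sub1set bigcup_seq => /bigcupP[L Lp].
have aL := allP ap L Lp; have [y fLy] := fsing L aL.
rewrite fLy inE => /eqP exy.
have eKL : K = L.
  apply: val_inj; apply/eqP; rewrite eqEsubset !emb ?atI // fKx fLy exy subxx.
  by [].
by move: Kp; rewrite eKL Lp.
Qed.

End Comb.
Set Implicit Arguments. Unset Strict Implicit. Unset Printing Implicit Defensive.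
Import GRing.Theory Num.Theory.
Local Open Scope ring_scope.

Section Alg.
Variables (gT : finGroupType) (G : {group gT}).

Definition conv (a b : gT -> algC) : gT -> algC :=
  fun g => \sum_(x in G) a x * b (x^-1 * g)%g.

Definition mxa n (rG : mx_representation algC G n) (a : gT -> algC) : 'M[algC]_n :=
  \sum_(g in G) a g *: rG g.

Lemma reindexG (V : nmodType) (F : gT -> V) x : x \in G ->
  \sum_(g in G) F g = \sum_(y in G) F (x * y)%g.
Proof.
move=> Gx; rewrite (reindex_inj (mulgI x)) /=.
by apply: eq_bigl => y; rewrite groupMl.
Qed.

Lemma reindexGr (V : nmodType) (F : gT -> V) x : x \in G ->
  \sum_(g in G) F g = \sum_(y in G) F (y * x)%g.
Proof.
move=> Gx; rewrite (reindex_inj (mulIg x)) /=.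
by apply: eq_bigl => y; rewrite groupMr.
Qed.

Lemma mxa_conv n (rG : mx_representation algC G n) a b :
  mxa rG (conv a b) = mxa rG a *m mxa rG b.
Proof.
rewrite /mxa /conv mulmx_suml.
under eq_bigr do rewrite scaler_suml.
rewrite exchange_big /=; apply: eq_bigr => x Gx.
rewrite (reindexG _ Gx) -scalemxAl mulmx_sumr scaler_sumr.
apply: eq_bigr => y Gy; rewrite mulKg -scalemxAr scalerA repr_mxM //.
Qed.

Lemma mxa_sub n (rG : mx_representation algC G n) a b :
  mxa rG (fun g => a g - b g) = mxa rG a - mxa rG b.
Proof. by rewrite /mxa -sumrB; apply: eq_bigr => g _; rewrite scalerBl. Qed.


Lemma tr_mxa (i : Iirr G) a y : y \in G ->
  \tr (mxa 'Chi_i a *m 'Chi_i y) = \sum_(g in G) a g * 'chi_i (g * y)%g.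
Proof.
move=> Gy; rewrite /mxa mulmx_suml raddf_sum; apply: eq_bigr => g Gg.
by rewrite -scalemxAl /= mxtraceZ -repr_mxM // -irrRepr cfunE groupM.
Qed.

Lemma mxa_faithful a : (forall i : Iirr G, mxa 'Chi_i a = 0) ->
  forall y, y \in G -> a y = 0.
Proof.
move=> h y Gy.
have E : \sum_(g in G) a g * cfReg G (g * y^-1)%g = 0.
  under eq_bigr do rewrite cfReg_sum sum_cfunE mulr_sumr.
  rewrite exchange_big /= big1 // => i _.
  under eq_bigr do rewrite cfunE mulrCA.
  by rewrite -mulr_sumr -tr_mxa ?groupV // h mul0mx mxtrace0 mulr0.
rewrite (bigD1 y) //= cfRegE mulgV eqxx big1 ?addr0 in E.
  by move/eqP: E; rewrite mulf_eq0 mulrn_eq0 /= pnatr_eq0 (negbTE (lt0n_neq0 (cardG_gt0 G))) orbF => /eqP.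
move=> g /andP[_ ngy]; rewrite cfRegE.
suff -> : (g * y^-1 == 1)%g = false by rewrite mulr0.
by apply: contraNF ngy => /eqP e; rewrite -(mulgKV y g) e mul1g.
Qed.


Definition u (K : {set gT}) : gT -> algC := fun g => (#|K|%:R)^-1 *+ (g \in K).
Definition fK (H K : {set gT}) : gT -> algC := fun g => u H g - u K g.
Definition rinv (X : {set gT}) (a : gT -> algC) :=
  forall g h, h \in X -> a (g * h)%g = a g.

Lemma conv_rinv X a b : rinv X b -> rinv X (conv a b).
Proof. by move=> hb g h Xh; apply: eq_bigr => x _; rewrite mulgA hb. Qed.

Lemma u_rinv (X K : {group gT}) : X \subset K -> rinv X (u K).
Proof. by move=> sXK g h Xh; rewrite /u groupMr // (subsetP sXK). Qed.

Lemma fK_rinv (H K : {group gT}) : H \subset K -> rinv H (fK H K).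
Proof. by move=> sHK g h Hh; rewrite /fK (u_rinv (subxx H) g Hh) (u_rinv sHK g Hh). Qed.

Lemma conv_D a b c g : conv a (fun x => b x - c x) g = conv a b g - conv a c g.
Proof. by rewrite /conv -sumrB; apply: eq_bigr => x _; rewrite mulrBr. Qed.

Lemma conv_uH (H : {group gT}) a : H \subset G -> rinv H a ->
  forall g, g \in G -> conv a (u H) g = a g.
Proof.
move=> sHG ha g Gg; rewrite /conv.
have -> : \sum_(x in G) a x * u H (x^-1 * g)%g =
          \sum_(x in G) a g * u H (x^-1 * g)%g.
  apply: eq_bigr => x Gx; rewrite /u; have [hx|hx] := boolP ((x^-1 * g)%g \in H); last by rewrite !mulr0n !mulr0.
  congr (_ * _); have := ha g (g^-1 * x)%g; rewrite mulKVg => -> //.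
  by rewrite -[(g^-1 * x)%g]invgK invMg invgK groupV.
rewrite -mulr_sumr /u.
under eq_bigr do rewrite mulrb.
rewrite -big_mkcondr /= sumr_const.
have -> : #|[pred x in G | (x^-1 * g)%g \in H]| = #|H|.
  rewrite -(card_lcoset H g); apply: eq_card => x; rewrite inE mem_lcoset.
  apply/andP/idP => [[_ hx] | hx].
    by rewrite -[(g^-1 * x)%g]invgK invMg invgK groupV.
  have Hx' : (x^-1 * g)%g \in H by rewrite -[(x^-1 * g)%g]invgK invMg invgK groupV.
  split=> //; rewrite -(mulKVg g x) groupM // (subsetP sHG) //.
by rewrite -[_ *+ #|H|]mulr_natr mulVf ?mulr1 // pnatr_eq0 (negbTE (lt0n_neq0 (cardG_gt0 H))).
Qed.


Definition supp (a : gT -> algC) (M : {set gT}) := forall g, a g != 0 -> g \in M.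

Lemma conv_supp a b (M K : {set gT}) : supp a M -> supp b K ->
  supp (conv a b) <<M :|: K>>%g.
Proof.
move=> ha hb g; apply: contraR => ngMK; rewrite /conv big1 // => x Gx.
have [ax0|/ha Mx] := eqVneq (a x) 0; first by rewrite ax0 mul0r.
have [bx0|/hb Kx] := eqVneq (b (x^-1 * g)%g) 0; first by rewrite bx0 mulr0.
case/negP: ngMK; rewrite -(mulKVg x g) groupM // mem_gen // inE ?Mx ?Kx ?orbT //.
Qed.

Lemma fK_supp (H K : {group gT}) : H \subset K -> supp (fK H K) K.
Proof.
move=> sHK g; apply: contraR => nKg.
by rewrite /fK /u (negbTE nKg) (contraNF (subsetP sHK g) nKg) !mulr0n subr0.
Qed.

Lemma step (H K M : {group gT}) a : H \subset K -> K \subset G -> M \subset G ->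
  supp a M -> rinv H a -> (exists g, a g != 0) -> ~~ (K \subset M) ->
  exists g, conv a (fK H K) g != 0.
Proof.
move=> sHK sKG sMG sa ra [m am] nKM.
have [g hg|all0] := pickP (fun g => conv a (fK H K) g != 0); first by exists g.
exfalso.
have Mm := sa m am; have Gm := subsetP sMG m Mm.
have [k Kk nMk] := subsetPn nKM; have Gk := subsetP sKG k Kk.
have eq_ac g : g \in G -> a g = conv a (u K) g.
  move=> Gg; have := all0 g; move/negbFE; rewrite /fK conv_D (conv_uH (subset_trans sHK sKG)) //.
  by rewrite subr_eq0 => /eqP.
have : a (m * k)%g = a m.
  rewrite !eq_ac ?groupM //; exact: (conv_rinv a (u_rinv (subxx K))).
move=> amk; have := sa (m * k)%g; rewrite amk am => /(_ isT).
by rewrite groupMl // (negbTE nMk).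
Qed.

End Alg.
Set Implicit Arguments. Unset Strict Implicit. Unset Printing Implicit Defensive.
Import GRing.Theory Num.Theory.
Local Open Scope ring_scope.

Section Q.
Variables (gT : finGroupType) (G H : {group gT}).

Definition q (s : seq {group gT}) :=
  foldl (fun a (K : {group gT}) => conv G a (fK H K)) (u H) s.

Lemma supp_sub a (X Y : {set gT}) : supp a X -> X \subset Y -> supp a Y.
Proof. by move=> hX sXY g /hX /(subsetP sXY). Qed.

Lemma atom_facts K : sg_atom H G K -> (H \subset K) && (K \subset G).
Proof. by case/and3P; rewrite /sg_interval inE. Qed.

Lemma q_props s : H \subset G -> bottom_boolean H G -> uniq s -> all (sg_atom H G) s ->
  [/\ supp (q s) <<H :|: \bigcup_(L <- s) L>>%g, rinv H (q s) & exists g, q s g != 0].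
Proof.
move=> sHG bB; elim/last_ind: s => [|s K IH].
  move=> _ _; split.
  - move=> g; rewrite /q /= /u; have [Hg|nHg] := boolP (g \in H).
      by rewrite mem_gen // inE Hg.
    by rewrite mulr0n eqxx.
  - exact: u_rinv.
  - exists 1%g; rewrite /q /= /u group1 mulr1n invr_eq0 pnatr_eq0.
    exact: lt0n_neq0 (cardG_gt0 H).
rewrite rcons_uniq all_rcons => /andP[nKs us] /andP[aK as_].
have [sp rp np] := IH us as_.
have /andP[sHK sKG] := atom_facts aK.
rewrite /q foldl_rcons -/(q s).
pose M := (<<H :|: \bigcup_(L <- s) L>>)%G.
have sMG : M \subset G.
  rewrite gen_subG subUset sHG bigcup_seq /=; apply/bigcupsP => L Ls.
  by have /andP[] := atom_facts (allP as_ L Ls).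
split.
- apply: supp_sub (conv_supp sp (fK_supp sHK)) _.
  rewrite -cats1 big_cat big_seq1 /= setUA gen_subG subUset; apply/andP; split.
    by apply: genS; apply: subsetUl.
  by apply: sub_gen; apply: subsetUr.
- exact: conv_rinv (fK_rinv sHK).
- apply: (step sHK sKG sMG sp rp np).
  exact: atoms_indep bB aK as_ nKs.
Qed.

End Q.
Set Implicit Arguments. Unset Strict Implicit. Unset Printing Implicit Defensive.
Import GRing.Theory Num.Theory.
Local Open Scope ring_scope.

Section R.
Variables (gT : finGroupType) (G : {group gT}) (n : nat)
  (rG : mx_representation algC G n).

Lemma mxa_u (X : {group gT}) : X \subset G ->
  mxa rG (u X) = (#|X|%:R)^-1 *: \sum_(x in X) rG x.
Proof.
move=> sXG; rewrite /mxa (bigID (mem X)) /= [X in _ + X]big1 ?addr0; last first.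
  by move=> g /andP[_ /negbTE nX]; rewrite /u nX mulr0n scale0r.
rewrite scaler_sumr; apply: eq_big => [g|g /andP[_ Xg]]; last by rewrite /u Xg mulr1n.
by rewrite andb_idl // => /(subsetP sXG).
Qed.

Lemma sum_reindexX (X : {group gT}) (F : gT -> 'M[algC]_n) x : x \in X ->
  \sum_(g in X) F g = \sum_(y in X) F (x * y)%g.
Proof.
move=> Xx; rewrite (reindex_inj (mulgI x)) /=.
by apply: eq_bigl => y; rewrite groupMl.
Qed.

Lemma sum_reindexXr (X : {group gT}) (F : gT -> 'M[algC]_n) x : x \in X ->
  \sum_(g in X) F g = \sum_(y in X) F (y * x)%g.
Proof.
move=> Xx; rewrite (reindex_inj (mulIg x)) /=.
by apply: eq_bigl => y; rewrite groupMr.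
Qed.

Lemma fK_zero (H K : {group gT}) : H \subset K -> K \subset G ->
  K \subset rstab rG (rfix_mx rG H) -> mxa rG (fK H K) = 0.
Proof.
move=> sHK sKG sKst; have sHG := subset_trans sHK sKG.
rewrite /fK mxa_sub !mxa_u //.
set EH := \sum_(x in H) rG x; set EK := \sum_(x in K) rG x.
have e1 : EH *m EK = EK *+ #|H|.
  rewrite /EH mulmx_suml -sumr_const; apply: eq_bigr => h Hh.
  have Kh := subsetP sHK h Hh.
  rewrite /EK mulmx_sumr [RHS](sum_reindexX _ Kh); apply: eq_bigr => k Kk.
  have Gh := subsetP sHG h Hh; have Gk := subsetP sKG k Kk.
  by rewrite repr_mxM.
have fixH : (EH <= rfix_mx rG H)%MS.
  apply/rfix_mxP => h Hh; rewrite /EH mulmx_suml [RHS](sum_reindexXr _ Hh).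
  by apply: eq_bigr => x Hx; rewrite repr_mxM // (subsetP sHG).
have e2 : EH *m EK = EH *+ #|K|.
  rewrite /EK mulmx_sumr -sumr_const; apply: eq_bigr => k Kk.
  have := subsetP sKst k Kk; rewrite inE => /andP[_ /eqP fixk].
  by case/submxP: fixH => D ->; rewrite -mulmxA fixk.
have nH : (#|H|%:R : algC) != 0 by rewrite pnatr_eq0 -lt0n cardG_gt0.
have nK : (#|K|%:R : algC) != 0 by rewrite pnatr_eq0 -lt0n cardG_gt0.
apply/eqP; rewrite subr_eq0; apply/eqP.
apply: (@scalerI _ _ (#|H|%:R * #|K|%:R)); first by rewrite mulf_neq0.
rewrite !scalerA mulrAC mulfV // mul1r -mulrA mulfV // mulr1.
by rewrite !scaler_nat -e1 -e2.
Qed.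

Lemma q_zero (H K : {group gT}) s : K \in s -> mxa rG (fK H K) = 0 ->
  mxa rG (q G H s) = 0.
Proof.
move=> Ks h0; elim/last_ind: s Ks => [//|s L IH].
rewrite mem_rcons inE /q foldl_rcons -/(q G H s) mxa_conv.
case/orP=> [/eqP <-|/IH ->]; first by rewrite h0 mulmx0.
by rewrite mul0mx.
Qed.

End R.

Theorem theorem3p13 (gT : finGroupType) (H G : {group gT}) :
  H \subset G -> bottom_boolean H G -> linearly_primitive H G.
Proof.
move=> sHG bB.
pose s := enum [set L : {group gT} | sg_atom H G L].
have us : uniq s by exact: enum_uniq.
have as_ : all (sg_atom H G) s by apply/allP => L; rewrite mem_enum inE.
have [sp _ [y qy]] := q_props sHG bB us as_.
have Gy : y \in G.
  apply: (subsetP _ y (sp y qy)); rewrite gen_subG subUset sHG bigcup_seq.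
  apply/bigcupsP => L Ls; by have /andP[] := atom_facts (allP as_ L Ls).
have [i ni] : exists i : Iirr G, mxa 'Chi_i (q G H s) != 0.
  have [i hi|all0] := pickP (fun i : Iirr G => mxa 'Chi_i (q G H s) != 0).
    by exists i.
  case/negP: qy; apply/eqP; apply: (mxa_faithful (G:=G)) Gy => i.
  by apply/eqP; move: (all0 i) => /negbFE.
exists _, 'Chi_i; split; first exact: socle_irr.
apply/eqP; rewrite eqEsubset; apply/andP; split; last first.
  apply/subsetP => h Hh; have Gh := subsetP sHG h Hh.
  by rewrite /rstab inE Gh /=; apply/eqP; apply: (rfix_mx_id _ Hh).
case: (boolP (rstab 'Chi_i (rfix_mx 'Chi_i H) \subset H)) => // nsub.
have pH : H \proper rstab 'Chi_i (rfix_mx 'Chi_i H).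
  rewrite properE nsub andbT; apply/subsetP => h Hh.
  by rewrite /rstab inE (subsetP sHG h Hh) /=; apply/eqP; apply: (rfix_mx_id _ Hh).
have [K /andP[aK sKst]] := atom_below pH (rstab_sub _ _).
have /andP[sHK sKG] := atom_facts aK.
case/negP: ni; apply/eqP; apply: (q_zero (K := K)).
  by rewrite mem_enum inE.
exact: fK_zero.
Qed.
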